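(* For every integer $k\ge1$, the vector $(1,3,k,1)$ is not realizable.
   Context: All graphs are finite, nonempty, and reflexive (every vertex has a loop). $N[v]$ is the closed neighborhood of $v$ (including $v$). For distinct $v,w$, $w$ strictly corners $v$ if $N[v]\subsetneq N[w]$; $v$ is then a strict corner. Corner ranking: set $G^{(1)}=G$, $k=1$. If $G^{(k)}$ is a clique, give all its vertices rank $k$ and stop. Else if $G^{(k)}$ has no strict corners, give all its vertices rank $\infty$ and stop. Else give every strict corner of $G^{(k)}$ rank $k$, delete them to get $G^{(k+1)}$ (induced subgraph), increase $k$ and repeat. The corner rank is the largest rank of a vertex; $X_k$ is the set of rank-$k$ vertices; cop-win graphs are exactly those of finite corner rank. The rank cardinality vector of a graph of corner rank $\alpha$ is $(x_\alpha,\dots,x_1)$ with $x_k=|X_k|$; a vector (finite list of positive integers) is realizable if it is the rank cardinality vector of some cop-win graph. *)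

(* Defs.v *)
From mathcomp Require Import all_boot.
Set Implicit Arguments. Unset Strict Implicit. Unset Printing Implicit Defensive.

(* A graph is a finite type T with an edge relation e : rel T that is
   reflexive (every vertex has a loop) and symmetric.  Induced subgraphs are
   given by vertex sets S : {set T}. *)
Section CornerRanking.
Variables (T : finType) (e : rel T).

Definition nbhd (S : {set T}) (v : T) : {set T} := [set w in S | e v w].

Definition strict_corner (S : {set T}) (v : T) : bool :=
  (v \in S) && [exists w in S, (w != v) && (nbhd S v \proper nbhd S w)].

Definition corners (S : {set T}) : {set T} := [set v | strict_corner S v].

Definition is_clique (S : {set T}) : bool :=
  [forall u in S, forall v in S, e u v].

(* G^(k) for k >= 1 : G^(1) = G, G^(k+1) = G^(k) minus its strict corners *)
Definition stage (k : nat) : {set T} :=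
  iter k.-1 (fun S => S :\: corners S) setT.

Definition corner_rank_is (a : nat) : Prop :=
  [/\ 1 <= a, is_clique (stage a) &
      forall k, 1 <= k < a -> ~~ is_clique (stage k) /\ corners (stage k) != set0].

Definition rank_set (a k : nat) : {set T} :=
  if k == a then stage k else corners (stage k).

Definition rank_card_vector (a : nat) : seq nat :=
  [seq #|rank_set a k| | k <- rev (iota 1 a)].

End CornerRanking.

Definition realizable (s : seq nat) : Prop :=
  exists (T : finType) (e : rel T),
    [/\ reflexive e, symmetric e, 0 < #|T| &
        exists a, corner_rank_is e a /\ s = rank_card_vector e a].

(* Main.v *)
Require Import Defs.
From mathcomp Require Import all_boot.
From mathcomp Require Import zify.
Set Implicit Arguments. Unset Strict Implicit. Unset Printing Implicit Defensive.

Section Proof.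
Variables (T : finType) (e : rel T).
Hypotheses (er : reflexive e) (es : symmetric e).

Lemma cornerP (S : {set T}) v : v \in corners e S ->
  v \in S /\ exists w, [/\ w \in S, w != v, (forall t, t \in S -> e v t -> e w t) &
     exists t, [/\ t \in S, e w t & ~~ e v t]].
Proof.
rewrite inE /strict_corner => /andP[vS /existsP[w /andP[wS /andP[wv]]]].
move/properP=> [sub [t tw tv]].
split=> //; exists w; split=> //.
  move=> t' t'S evt; have: t' \in nbhd e S v by rewrite inE t'S evt.
  by move/(subsetP sub); rewrite inE => /andP[].
exists t; move: tw tv; rewrite !inE => /andP[-> ->] /=.
by [].
Qed.

Lemma corner_intro (S : {set T}) v w : v \in S -> w \in S -> w != v ->
  (forall t, t \in S -> e v t -> e w t) -> forall t, t \in S -> e w t -> ~~ e v t ->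
  v \in corners e S.
Proof.
move=> vS wS wv sub t tS ewt nevt.
rewrite inE /strict_corner vS /=; apply/existsP; exists w; rewrite wS wv /=.
apply/properP; split.
  apply/subsetP=> t'; rewrite !inE => /andP[t'S evt]; by rewrite t'S sub.
by exists t; rewrite !inE ?tS ?ewt ?nevt.
Qed.

Lemma lt_nb (S : {set T}) v w t :
  (forall t, t \in S -> e v t -> e w t) -> t \in S -> e w t -> ~~ e v t ->
  #|nbhd e S v| < #|nbhd e S w|.
Proof.
move=> sub tS ewt nevt; apply: proper_card; apply/properP; split.
  apply/subsetP=> t'; rewrite !inE => /andP[t'S evt]; by rewrite t'S sub.
by exists t; rewrite !inE ?tS ?ewt ?nevt.
Qed.

Lemma nb_le (S : {set T}) v : #|nbhd e S v| <= #|S|.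
Proof. by apply: subset_leq_card; apply/subsetP=> t; rewrite inE => /andP[]. Qed.

Lemma LD (S : {set T}) v : v \in corners e S ->
  exists w, [/\ w \in S, w \notin corners e S, (forall t, t \in S -> e v t -> e w t) &
     exists t, [/\ t \in S, e w t & ~~ e v t]].
Proof.
move: (leqnn (#|S| - #|nbhd e S v|)); move: {2}(#|S| - #|nbhd e S v|) => n.
elim: n v => [|n IH] v hn vc;
  have [vS [w [wS wv sub [t [tS ewt nevt]]]]] := cornerP vc;
  (case: (boolP (w \in corners e S)) => wc; last by exists w; split => //; exists t).
- have := lt_nb sub tS ewt nevt; have := nb_le S w; lia.
- have := lt_nb sub tS ewt nevt; have := nb_le S w => h1 h2.
  have [|w' [w'S w'c sub' [t' [t'S ew't' new't']]]] := IH w _ wc; first by lia.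
  exists w'; split => //; first by move=> s sS evs; apply: sub' => //; apply: sub.
  exists t'; split => //; apply/negP => evt'; move/negP: new't'; apply; exact: sub.
Qed.

Lemma three (C : {set T}) a b h t : #|C| = 3 -> a \in C -> b \in C -> h \in C ->
  a != b -> h != a -> h != b -> t \in C -> [|| t == a, t == b | t == h].
Proof.
move=> c3 aC bC hC ab ha hb tC.
have sub : [set a; b; h] \subset C.
  by apply/subsetP => s; rewrite !inE => /orP[/orP[]|] /eqP ->.
have cd : #|[set a; b; h]| = 3.
  rewrite setUC cardsU1 cards2 !inE ab negb_or ha hb /=.
  by [].
have /eqP eqC : [set a; b; h] == C by rewrite eqEcard sub cd c3.
by move: tC; rewrite -eqC !inE -orbA.
Qed.

Lemma main_false :
  let G := [set: T] in
  let S := G :\: corners e G in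
  let H := S :\: corners e S in
  #|H :\: corners e H| = 1 -> #|corners e H| = 3 -> #|corners e G| = 1 -> False.
Proof.
move=> G S H hU hC hG.
have [x hx] : exists x, corners e G = [set x] by apply/cards1P; rewrite hG.
have [u hu] : exists u, H :\: corners e H = [set u] by apply/cards1P; rewrite hU.
set Y := corners e S in H hu hC hU *.
set C := corners e H in hu hC hU *.
have inS t : (t \in S) = (t != x) by rewrite in_setD hx in_set1 in_setT andbT.
have inH t : (t \in H) = (t \notin Y) && (t \in S) by rewrite in_setD.
have CH c : c \in C -> c \in H by case/cornerP.
have YS y : y \in Y -> y \in S by case/cornerP.
have HS t : t \in H -> t \in S by rewrite inH => /andP[].
have HC t : t \in H -> t \notin C -> t = u.
  by move=> tH tC; apply/set1P; rewrite -hu in_setD tC tH.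
have uH : u \in H by have := set11 u; rewrite -hu in_setD => /andP[].
have uC : u \notin C by have := set11 u; rewrite -hu in_setD => /andP[].
have step1 c : c \in C -> [/\ e c u, (forall t, t \in H -> e c t -> e u t) &
     exists t, [/\ t \in H, e u t & ~~ e c t]].
  move=> cC; have [w [wH wC sub wit]] := LD cC.
  have wu := HC w wH wC; subst w.
  by split => //; rewrite es; apply: sub; [apply: CH | apply: er].
have F2 c : c \in C -> exists t, [/\ t \in C, t != c & ~~ e c t].
  move=> cC; have [ecu _ [t [tH eut nect]]] := step1 c cC.
  exists t; split => //.
    apply/negPn/negP => tC; have tu := HC t tH tC; subst t; by rewrite ecu in nect.
  by apply/eqP => tc; subst t; rewrite er in nect.
have stepY b : b \in C -> exists y, [/\ y \in Y, e b y & ~~ e u y].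
  move=> bC; have [ebu subb [t [tH eut nebt]]] := step1 b bC.
  case: (boolP [exists y, [&& y \in Y, e b y & ~~ e u y]]).
    by case/existsP => y /and3P[? ? ?]; exists y.
  move/existsPn => hn.
  have bY : b \in Y.
    apply: (corner_intro (w := u) _ _ _ _ (t := t)) => //.
    - exact: HS (CH b bC).
    - exact: HS.
    - by apply/eqP => ub; subst b; rewrite bC in uC.
    - move=> s sS ebs; case: (boolP (s \in Y)) => sY.
        by move: (hn s); rewrite sY ebs /= negbK.
      by apply: subb => //; rewrite inH sY sS.
    - exact: HS.
  by move: (CH b bC); rewrite inH bY.
have Yx y : y \in Y -> e y x.
  move=> yY; have [h [hS hY sub [t [tS eht neyt]]]] := LD yY.
  apply/negPn/negP => neyx.
  have : y \in corners e G.
    apply: (corner_intro (w := h) _ _ _ _ (t := t)) => //; rewrite ?in_setT //.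
      by apply/eqP => hy; subst h; rewrite yY in hY.
    move=> s _ eys; apply: sub => //; rewrite inS; apply/eqP => sx; subst s.
    by rewrite eys in neyx.
  rewrite hx in_set1 => /eqP yx; by move: (YS y yY); rewrite inS yx eqxx.
have xG : x \in corners e G by rewrite hx set11.
have [_ [z [_ zx subz _]]] := cornerP xG.
have zS : z \in S by rewrite inS.
have [a [aH aY]] : exists a, a \in H /\ forall y, y \in Y -> e a y.
  case: (boolP (z \in Y)) => zY.
    have [h [hS hY sub _]] := LD zY.
    exists h; split; first by rewrite inH hY hS.
    move=> y yY; apply: sub; first exact: YS.
    by apply: subz; [by rewrite in_setT | rewrite es; exact: Yx].
  exists z; split; first by rewrite inH zY zS.
  by move=> y yY; apply: subz; [by rewrite in_setT | rewrite es; exact: Yx].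
have [c0 c0C] : exists c, c \in C.
  by apply/set0Pn; rewrite -card_gt0 hC.
have aC : a \in C.
  case: (boolP (a \in C)) => // aC; have au := HC a aH aC; subst a.
  have [y [yY _ neuy]] := stepY c0 c0C; by rewrite aY in neuy.
have adj b : b \in C -> b != a -> e a b.
  move=> bC ba; have [y [yY eby neuy]] := stepY b bC.
  have [h [hS hY sub _]] := LD yY.
  have hH : h \in H by rewrite inH hY hS.
  have eha : e h a by apply: sub; [exact: HS | rewrite es; apply: aY].
  have ehb : e h b by apply: sub; [exact: HS (CH b bC) | rewrite es].
  have ehy : e h y by apply: sub; [exact: YS | exact: er].
  have hC' : h \in C.
    case: (boolP (h \in C)) => // hC0; have hu0 := HC h hH hC0; subst h; by rewrite ehy in neuy.
  case: (eqVneq h a) => [ha | ha]; first by subst h.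
  case: (eqVneq h b) => [hb | hb]; first by subst h; rewrite es.
  have [t [tC th neht]] := F2 h hC'.
  have := three hC bC aC hC' ba hb ha tC.
  by case/or3P => /eqP tt; subst t; rewrite ?eha ?ehb ?eqxx in neht th.
have [t [tC ta neat]] := F2 a aC.
by rewrite adj in neat.
Qed.

End Proof.

Theorem corollary3p25 (k : nat) : 1 <= k -> ~ realizable [:: 1; 3; k; 1].
Proof.
move=> _ [T [e [er es _ [a [_ hv]]]]].
have ha : a = 4.
  have := congr1 size hv; by rewrite /rank_card_vector size_map size_rev size_iota.
subst a; move: hv; rewrite /rank_card_vector /rank_set /=.
case=> h4 h3 _ h1.
exact: (main_false er es (esym h4) (esym h3) (esym h1)).
Qed.
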